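(* Let $G$ be a graph on $n$ vertices with degrees $d_1,\ldots,d_n$, let $\overline{G}$ be its complement with signless Laplacian eigenvalues $\overline{q}_1\ge\cdots\ge\overline{q}_n$, and let $t\ge 1$ be an integer. Then the signless Laplacian eigenvalues of $\overline{G^{(t)}}$ (the complement of the blow-up $G^{(t)}$), listed with multiplicity (a total of $tn$ values), are $t\overline{q}_1+2(t-1),\ldots,t\overline{q}_n+2(t-1)$ together with $tn-td_1-2,\ldots,tn-td_n-2$, where each $tn-td_i-2$ ($i=1,\ldots,n$) is taken with multiplicity $t-1$.
   Context: All graphs are simple and undirected; $\overline{H}$ denotes the complement of a graph $H$. For a graph $H$, $A(H)$ is its adjacency matrix, $D(H)$ the diagonal matrix of its vertex degrees, and $Q(H)=D(H)+A(H)$ its signless Laplacian matrix; signless Laplacian eigenvalues are the eigenvalues of $Q(H)$. For a graph $G$ and an integer $t\ge 1$, the blow-up $G^{(t)}$ is the graph obtained by replacing each vertex $u$ of $G$ by a set $V_u$ of $t$ pairwise nonadjacent vertices, and each edge $\{u,v\}$ of $G$ by a complete bipartite graph with parts $V_u$ and $V_v$ (so $A(G^{(t)})=A(G)\otimes J_t$, with $J_t$ the $t\times t$ all-ones matrix). *)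

(* Defs.v *)
From HB Require Import structures.
From mathcomp Require Import all_boot all_order all_algebra.
Set Implicit Arguments. Unset Strict Implicit.
Import Order.TTheory GRing.Theory Num.Theory.
Local Open Scope ring_scope.

Definition simple_graph (T : finType) (e : rel T) : Prop :=
  irreflexive e /\ symmetric e.

Definition compl_graph (T : finType) (e : rel T) : rel T :=
  fun x y => (x != y) && ~~ e x y.

Definition blowup (T : finType) (t : nat) (e : rel T) : rel (T * 'I_t) :=
  fun x y => e x.1 y.1.

Definition deg (T : finType) (e : rel T) (x : T) : nat := #|[set y | e x y]|.

Definition adjmx (R : nzRingType) (T : finType) (e : rel T) : 'M[R]_#|T| :=
  \matrix_(i, j) (e (enum_val i) (enum_val j))%:R.

Definition degmx (R : nzRingType) (T : finType) (e : rel T) : 'M[R]_#|T| :=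
  \matrix_(i, j) ((i == j)%:R * (deg e (enum_val i))%:R).

Definition sless_lap (R : nzRingType) (T : finType) (e : rel T) : 'M[R]_#|T| :=
  degmx R e + adjmx R e.
Arguments blowup {T} t e.

(* Main.v *)
Require Import Defs.
From HB Require Import structures.
From mathcomp Require Import all_boot all_order all_algebra fingroup perm.
From mathcomp Require Import ring lra.
Import Order.TTheory GRing.Theory Num.Theory.
Local Open Scope ring_scope.

Lemma cp_sim (R : idomainType) k (A B S : 'M[R]_k) :
  A *m S = S *m B -> \det S != 0 -> char_poly A = char_poly B.
Proof.
move=> AS dS.
have H : char_poly_mx A *m map_mx polyC S = map_mx polyC S *m char_poly_mx B.
  rewrite /char_poly_mx mulmxBl mulmxBr -!map_mxM AS; congr (_ - _).
  by rewrite mul_scalar_mx mul_mx_scalar.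
have := congr1 determinant H; rewrite !det_mulmx det_map_mx /= [X in X = _]mulrC.
by apply: mulfI; rewrite polyC_eq0.
Qed.

Lemma cp_perm {R : idomainType} {k} (s : 'S_k) (A : 'M[R]_k) :
  char_poly (row_perm s (col_perm s A)) = char_poly A.
Proof.
apply: (@cp_sim _ _ _ _ (perm_mx s)).
  by rewrite row_permE col_permE -!mulmxA -perm_mxM mulVg perm_mx1 mulmx1.
by rewrite det_perm signr_eq0.
Qed.

Lemma cp_reindex (R : idomainType) (J : finType) m (h : 'I_m -> J)
  (F : J -> J -> R) : bijective h ->
  char_poly (\matrix_(i, j) F (h i) (h j) : 'M[R]_m) =
  char_poly (\matrix_(i, j) F (enum_val i) (enum_val j) : 'M[R]_#|J|).
Proof.
move=> hb; have e : m = #|J| by rewrite -(card_ord m); apply: bij_eq_card hb.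
subst m.
have ginj : injective (fun i => enum_rank (h i)).
  by move=> i j /enum_rank_inj; apply: (bij_inj hb).
rewrite -[RHS](cp_perm (perm ginj)); congr char_poly.
by apply/matrixP => i j; rewrite !mxE !permE /= !enum_rankK.
Qed.

Lemma big_enum (R : Type) (idx : R) (op : Monoid.com_law idx) (T : finType) (G : T -> R) :
  \big[op/idx]_(k < #|T|) G (enum_val k) = \big[op/idx]_x G x.
Proof. by rewrite -big_enum_val. Qed.

Definition hb (T : finType) s (i : 'I_(#|T| + #|{: T * 'I_s}|)) : T * 'I_s.+1 :=
  match split i with
  | inl a => (enum_val a, ord0)
  | inr b => ((enum_val b).1, lift ord0 (enum_val b).2)
  end.

Definition hbinv (T : finType) s (x : T * 'I_s.+1) : 'I_(#|T| + #|{: T * 'I_s}|) :=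
  match unlift ord0 x.2 with
  | None => lshift _ (enum_rank x.1)
  | Some b => rshift _ (enum_rank (x.1, b))
  end.

Arguments hb {T s}.
Lemma hb_bij (T : finType) s : bijective (@hb T s).
Proof.
exists (@hbinv T s).
  move=> i; rewrite /hb /hbinv -[i]splitK; case: (split i) => a /=.
    by rewrite (unsplitK (inl _ a)) /= unlift_none enum_valK.
  by rewrite (unsplitK (inr _ a)) /= liftK -surjective_pairing enum_valK.
move=> [u a]; rewrite /hb /hbinv /=; case: unliftP => [b ->|->] /=.
  by rewrite (unsplitK (inr _ (enum_rank (u, b)))) /= enum_rankK.
by rewrite (unsplitK (inl _ (enum_rank u))) /= enum_rankK.
Qed.

Lemma cp_ublock (R : comNzRingType) n1 n2 (A : 'M[R]_n1) (B : 'M[R]_(n1, n2)) (D : 'M[R]_n2) :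
  char_poly (block_mx A B 0 D) = char_poly A * char_poly D.
Proof.
rewrite /char_poly /char_poly_mx map_block_mx /= map_mx0 (scalar_mx_block n1 n2).
by rewrite opp_block_mx add_block_mx oppr0 addr0 det_ublock.
Qed.

Lemma hb_l (T : finType) s a : @hb T s (lshift _ a) = (enum_val a, ord0).
Proof. by rewrite /hb (unsplitK (inl _ a)). Qed.

Lemma hb_r (T : finType) s b :
  @hb T s (rshift _ b) = ((enum_val b).1, lift ord0 (enum_val b).2).
Proof. by rewrite /hb (unsplitK (inr _ b)). Qed.

Lemma pair_lift_eq (T : finType) s (k l : 'I_#|{: T * 'I_s}|) :
  (((enum_val k).1, lift ord0 (enum_val k).2) ==
   ((enum_val l).1, lift ord0 (enum_val l).2) :> T * 'I_s.+1) = (k == l).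
Proof.
by rewrite xpair_eqE (inj_eq lift_inj) -xpair_eqE -!surjective_pairing
  (inj_eq enum_val_inj).
Qed.

Lemma pair_l_eq (T : finType) s (a : T) (b : T) (c : 'I_s) :
  ((a, ord0) == (b, lift ord0 c) :> T * 'I_s.+1) = false.
Proof. by rewrite xpair_eqE (negPf (neq_lift _ _)) andbF. Qed.

Lemma sumC1 (R : comNzRingType) (T : finType) s (G : T -> R) (v : T) :
  \sum_(k < #|{: T * 'I_s}|) G (enum_val k).1 * ((enum_val k).1 == v)%:R
  = s%:R * G v.
Proof.
rewrite (@big_enum _ _ _ _ (fun p : T * 'I_s => G p.1 * (p.1 == v)%:R)).
rewrite -[LHS](pair_bigA _ (fun (u : T) (_ : 'I_s) => G u * (u == v)%:R)) /=.
rewrite (bigD1 v) //= [X in _ + X]big1 ?addr0; last first.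
  by move=> u /negPf uv; rewrite uv mulr0 big1.
by rewrite eqxx mulr1 sumr_const card_ord mulr_natl.
Qed.

Lemma sumC2 (R : comNzRingType) (T : finType) (w : T) (G : 'I_#|T| -> R) :
  \sum_(u < #|T|) (w == enum_val u)%:R * G u = G (enum_rank w).
Proof.
rewrite (bigD1 (enum_rank w)) //= enum_rankK eqxx mul1r big1 ?addr0 //.
move=> u uw; case: eqP => [wu|]; last by rewrite mul0r.
by move: uw; rewrite wu enum_valK eqxx.
Qed.

Lemma blow_cp (R : fieldType) (T : finType) s (M : T -> T -> R) (y : T -> R) :
  char_poly (\matrix_(i, j) (M (enum_val i).1 (enum_val j).1 +
     (enum_val i == enum_val j)%:R * y (enum_val i).1) : 'M[R]_#|{: T * 'I_s.+1}|)
  = char_poly (\matrix_(i, j) (s.+1%:R * M (enum_val i) (enum_val j) +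
       (i == j)%:R * y (enum_val i)) : 'M[R]_#|T|) *
    \prod_u ('X - (y u)%:P) ^+ s.
Proof.
pose F := fun a b : T * 'I_s.+1 => M a.1 b.1 + (a == b)%:R * y a.1.
transitivity (char_poly (\matrix_(i, j) F (hb i) (hb j))).
  by symmetry; apply: cp_reindex; apply: hb_bij.
pose n1 := #|T|; pose n2 := #|{: T * 'I_s}|.
pose C : 'M[R]_(n2, n1) := \matrix_(k, v) ((enum_val k).1 == enum_val v)%:R.
pose S : 'M[R]_(n1 + n2) := block_mx 1%:M 0 C 1%:M.
pose B11 : 'M[R]_n1 := \matrix_(i, j) (s.+1%:R * M (enum_val i) (enum_val j) +
       (i == j)%:R * y (enum_val i)).
pose B12 : 'M[R]_(n1, n2) := \matrix_(u, k) M (enum_val u) (enum_val k).1.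
pose B22 : 'M[R]_n2 := \matrix_(k, l) ((k == l)%:R * y (enum_val k).1).
transitivity (char_poly (block_mx B11 B12 0 B22)); last first.
  rewrite cp_ublock; congr (_ * _).
  rewrite char_poly_trig; last first.
    by apply/is_trig_mxP => i j ij; rewrite mxE -val_eqE /= (ltn_eqF ij) mul0r.
  rewrite (eq_bigr (fun k : 'I_n2 => 'X - (y (enum_val k).1)%:P)); last first.
    by move=> k _; rewrite mxE eqxx mul1r.
  rewrite (@big_enum _ _ _ _ (fun p : T * 'I_s => 'X - (y p.1)%:P)) .
  rewrite -[LHS](pair_bigA _ (fun (u : T) (_ : 'I_s) => 'X - (y u)%:P)) /=.
  by apply: eq_bigr => u _; rewrite prodr_const card_ord.
apply: (@cp_sim _ _ _ _ S); last first.
  by rewrite det_lblock !det1 mulr1 oner_neq0.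
rewrite -[X in X *m _]submxK mulmx_block.
rewrite /S mulmx_block !mulmx1 !mul1mx !mulmx0 !mul0mx !addr0 !add0r.
congr (block_mx _ _ _ _); apply/matrixP => i j; rewrite !mxE.
- rewrite !hb_l /F /= xpair_eqE eqxx andbT (inj_eq enum_val_inj).
  under eq_bigr => k _ do rewrite !mxE !hb_l !hb_r /= pair_l_eq mul0r addr0.
  rewrite sumC1; ring.
- by rewrite !hb_l !hb_r /F /= pair_l_eq mul0r addr0.
- rewrite !hb_l !hb_r /F /= eq_sym pair_l_eq mul0r addr0.
  under eq_bigr => k _ do rewrite !mxE !hb_r /= pair_lift_eq mulrDl.
  rewrite big_split /= sumC1.
  under [X in _ = X]eq_bigr => k _ do rewrite !mxE.
  rewrite sumC2 (bigD1 i) //= eqxx mul1r big1 ?addr0; last first.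
    by move=> k /negPf ki; rewrite eq_sym ki !mul0r.
  have eK := @enum_rankK T; rewrite /= in eK; rewrite eK.
  have -> : (enum_rank (enum_val i).1 == j) = ((enum_val i).1 == enum_val j).
    by rewrite -(inj_eq enum_val_inj) eK.
  ring.

- rewrite !hb_r /F /= pair_lift_eq.
  under [X in _ = X + _]eq_bigr => k _ do rewrite !mxE.
  by rewrite sumC2 enum_rankK.
Qed.

Lemma deg_compl (T : finType) (e : rel T) u : irreflexive e ->
  (deg (compl_graph e) u + 1 + deg e u = #|T|)%N.
Proof.
move=> irr; rewrite /deg.
have -> : [set v | compl_graph e u v] = [set v | ~~ e u v] :\ u.
  by apply/setP => v; rewrite !inE /compl_graph eq_sym.
rewrite /deg.
have h := cardsD1 u [set v | ~~ e u v]; rewrite inE irr /= in h.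
rewrite addn1 -add1n -h.
have -> : [set v | ~~ e u v] = ~: [set v | e u v] by apply/setP => v; rewrite !inE.
by rewrite addnC cardsC.
Qed.

Lemma deg_compl_blow (T : finType) (e : rel T) t (x : T * 'I_t) : irreflexive e ->
  (deg (compl_graph (blowup t e)) x + 1 + t * deg e x.1 = t * #|T|)%N.
Proof.
move=> irr; case: x => u a /=; rewrite /deg.
have -> : [set y | compl_graph (blowup t e) (u, a) y] =
    setX [set v | ~~ e u v] [set: 'I_t] :\ (u, a).
  by apply/setP => [[v b]]; rewrite !inE /compl_graph /blowup /= eq_sym andbT.
rewrite /deg.
have h := cardsD1 (u, a) (setX [set v | ~~ e u v] [set: 'I_t]).
rewrite !inE irr /= in h; rewrite addn1 -add1n -h.
rewrite cardsX cardsT card_ord mulnC -mulnDr; congr (_ * _)%N.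
have -> : [set v | ~~ e u v] = ~: [set v | e u v] by apply/setP => v; rewrite !inE.
by rewrite addnC cardsC.
Qed.

Lemma cp_affine (R : fieldType) n (A : 'M[R]_n) (a c : R) (q : 'I_n -> R) :
  a != 0 -> char_poly A = \prod_(i < n) ('X - (q i)%:P) ->
  char_poly (a *: A + c%:M) = \prod_(i < n) ('X - (a * q i + c)%:P).
Proof.
move=> a0 hA.
pose r : {poly R} := a^-1 *: ('X - c%:P).
pose phi := comp_poly r.
have E : char_poly_mx (a *: A + c%:M) = a%:P *: map_mx phi (char_poly_mx A).
  apply/matrixP => i j; rewrite !mxE /phi.
  case: (i == j); rewrite /= ?mulr1n ?mulr0n.
    rewrite comp_polyB comp_polyX comp_polyC.
    rewrite /r -mul_polyC mulrBr mulrA -polyCM mulfV // mul1r -!polyCM.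
    by rewrite polyCD opprD addrA addrAC.
  by rewrite !sub0r addr0 raddfN /= comp_polyC mulrN -polyCM.
rewrite /char_poly E detZ det_map_mx /= -/(char_poly A) hA rmorph_prod.
rewrite -[in X in X * _](card_ord n) -prodr_const -big_split /=; apply: eq_bigr => i _.
rewrite rmorphB /= comp_polyX comp_polyC /r -mul_polyC mulrBr mulrA -polyCM mulfV // mul1r -!polyCM.
by rewrite polyCD opprD addrA addrAC.
Qed.

Theorem theorem3 (R : rcfType) (T : finType) (e : rel T) (t : nat)
    (q : 'I_#|T| -> R) :
  simple_graph e -> (1 <= t)%N ->
  char_poly (sless_lap R (compl_graph e)) = \prod_(i < #|T|) ('X - (q i)%:P) ->
  char_poly (sless_lap R (compl_graph (blowup t e))) =
    \prod_(i < #|T|) ('X - (t%:R * q i + 2 * (t - 1)%:R)%:P) *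
    \prod_(x : T) ('X - ((t * #|T|)%:R - (t * deg e x)%:R - 2)%:P) ^+ (t - 1).
Proof.
move=> [irr sym] t1 hq.
case: t t1 => [//|s] _.
rewrite subSS subn0.
pose M := fun u v : T => (~~ e u v)%:R : R.
pose y := fun u : T => (s.+1 * #|T|)%:R - (s.+1 * deg e u)%:R - 2 : R.
have Q1 : sless_lap R (compl_graph (blowup s.+1 e)) =
  \matrix_(i, j) (M (enum_val i).1 (enum_val j).1 +
     (enum_val i == enum_val j)%:R * y (enum_val i).1).
  apply/matrixP => i j; rewrite !mxE /M /y -(inj_eq enum_val_inj).
  case: eqP => [->|ne]; last first.
    by rewrite mul0r add0r mul0r addr0 /compl_graph /blowup; case: eqP.
  have cx : compl_graph (blowup s.+1 e) (enum_val j) (enum_val j) = false.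
    by rewrite /compl_graph eqxx.
  rewrite mul1r cx addr0 irr mul1r.
  have := @deg_compl_blow T e s.+1 (enum_val j) irr.
  move/eqP; rewrite -(eqr_nat R) => /eqP; rewrite !natrD !natrM => hh.
  rewrite [(~~ false)%:R]/= ; lra.
have Q2 : \matrix_(i, j) (s.+1%:R * M (enum_val i) (enum_val j) +
       (i == j)%:R * y (enum_val i)) =
    s.+1%:R *: sless_lap R (compl_graph e) + (2 * s%:R)%:M.
  apply/matrixP => i j; rewrite !mxE /M /y.
  case: eqP => [<-|ne]; last first.
    rewrite !mul0r !add0r addr0 mulr0n addr0 /compl_graph (inj_eq enum_val_inj).
    by move/eqP/negPf: ne => ->.
  have cx : compl_graph e (enum_val i) (enum_val i) = false.
    by rewrite /compl_graph eqxx.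
  rewrite cx irr mulr1n !mul1r addr0.
  have := @deg_compl T e (enum_val i) irr.
  move/eqP; rewrite -(eqr_nat R) => /eqP; rewrite !natrD => hh.
  have -> : (deg (compl_graph e) (enum_val i))%:R = (#|T|%:R - 1 - (deg e (enum_val i))%:R : R) by lra.
  rewrite !natrM -!natr1 mulr1n; lra.
rewrite Q1 blow_cp Q2 (@cp_affine _ _ _ _ _ _ _ hq) //.
by rewrite pnatr_eq0.
Qed.
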